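(* Let $V$ be a finite-dimensional real vector space with a nondegenerate symmetric bilinear form $b$, and let $J\in PC(V)$ be a metric-$b$ algebraic Jacobi curvature operator. Put $G(x)=1_V-\tfrac13J(x,x)$ for $x\in V$, let $U_J=\{x\in V:G(x)\text{ invertible}\}$ (an open set containing $0$), and define $g_x(u,v)=b(G(x)u,v)$ on $U_J$. Then $g$ is a semi-Riemannian metric on $U_J$ with $g_0=b$, its Levi-Civita connection is $$(\nabla^g_uv)(x)=(D_uv)(x)+\tfrac23\,G(x)^{-1}J(u(x),v(x))x,$$ and its Riemann and Jacobi curvature operators at $0$ satisfy $\mathcal R_{\nabla^g}(0)=R_J$ and $\mathcal J_{\nabla^g}(0)=J$.
   Context: $PC(V)$: bilinear maps $V\times V\to L(V;V)$. $J$ is a metric-$b$ algebraic Jacobi curvature operator if $J(u,v)=J(v,u)$, $J(u,v)w+J(v,w)u+J(w,u)v=0$, and $b(J(u,v)w,x)=b(J(w,x)u,v)$ for all $u,v,w,x$. $D$ is ordinary differentiation of $V$-valued functions (vector fields on open subsets of $V$). Curvature: $\mathcal R_\nabla(u,v)=[\nabla_u,\nabla_v]-\nabla_{[u,v]}$; $R_J(u,v)w=\tfrac23(J(w,v)u-J(w,u)v)$; Jacobi operator $\mathcal J_\nabla(u,v)w=\tfrac12(\mathcal R_\nabla(w,v)u+\mathcal R_\nabla(w,u)v)$. *)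

(* Defs.v *)
From HB Require Import structures.
From mathcomp Require Import all_boot all_order all_algebra.
From mathcomp Require Import all_classical all_reals all_analysis.
Set Implicit Arguments. Unset Strict Implicit. Unset Printing Implicit Defensive.
Import Order.TTheory GRing.Theory Num.Theory.
Import numFieldNormedType.Exports.
Local Open Scope ring_scope.
Local Open Scope classical_set_scope.

(* V is modelled as the row space 'rV[R]_n.  Linear maps V -> V are matrices
   acting on the right: the image of u under A is  u *m A.
   An element J of PC(V) is a map  J : V -> V -> 'M[R]_n  (bilinear), with
   J(u,v)w := w *m J u v. *)

Section Defs.
Variables (R : realType) (n : nat).
Local Notation V := 'rV[R]_n.

Fixpoint dderiv (W : normedModType R) (vs : seq V) (f : V -> W) : V -> W :=
  match vs with
  | [::] => f
  | v :: vs' => fun x => 'D_v (dderiv vs' f) x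
  end.

Definition smooth_on (W : normedModType R) (A : set V) (f : V -> W) :=
  forall (vs : seq V) (x : V), A x -> differentiable (dderiv vs f) x.

Definition nondeg_sym_bilinear (b : V -> V -> R) :=
  [/\ forall (a : R) (u v w : V), b (a *: u + v) w = a * b u w + b v w,
      forall u v, b u v = b v u
    & forall u, (forall v, b u v = 0) -> u = 0].

Definition is_PC (J : V -> V -> 'M[R]_n) :=
  (forall (a : R) (u v w : V), J (a *: u + v) w = a *: J u w + J v w) /\
  (forall (a : R) (u v w : V), J u (a *: v + w) = a *: J u v + J u w).

Definition metric_alg_Jacobi (b : V -> V -> R) (J : V -> V -> 'M[R]_n) :=
  [/\ is_PC J,
      forall u v, J u v = J v u,
      forall u v w, w *m J u v + u *m J v w + v *m J w u = 0
    & forall u v w x, b (w *m J u v) x = b (u *m J w x) v].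

Definition Gop (J : V -> V -> 'M[R]_n) (x : V) : 'M[R]_n :=
  1%:M - (3%:R)^-1 *: J x x.

Definition UJ (J : V -> V -> 'M[R]_n) : set V := [set x | Gop J x \in unitmx].

Definition gmet (b : V -> V -> R) (J : V -> V -> 'M[R]_n) (x u v : V) : R :=
  b (u *m Gop J x) v.

Definition Dvf (u v : V -> V) (x : V) : V := 'D_(u x) v x.

Definition bracket (u v : V -> V) (x : V) : V := Dvf u v x - Dvf v u x.

Definition nablaJ (J : V -> V -> 'M[R]_n) (u v : V -> V) (x : V) : V :=
  Dvf u v x + (2%:R / 3%:R) *: ((x *m J (u x) (v x)) *m invmx (Gop J x)).

Definition Rcurv (nab : (V -> V) -> (V -> V) -> V -> V) (u v w : V -> V) (x : V) : V :=
  nab u (nab v w) x - nab v (nab u w) x - nab (bracket u v) w x.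

Definition Jcurv (nab : (V -> V) -> (V -> V) -> V -> V) (u v w : V -> V) (x : V) : V :=
  (2%:R)^-1 *: (Rcurv nab w v u x + Rcurv nab w u v x).

Definition RJ (J : V -> V -> 'M[R]_n) (u v w : V) : V :=
  (2%:R / 3%:R) *: (u *m J w v - v *m J w u).

End Defs.

(* Main.v *)
Require Import Defs.
From HB Require Import structures.
From mathcomp Require Import all_boot all_order all_algebra.
From mathcomp Require Import all_classical all_reals all_analysis.
From mathcomp Require Import ring lra.
Import Order.TTheory GRing.Theory Num.Theory.
Import numFieldNormedType.Exports.
Local Open Scope ring_scope.
Local Open Scope classical_set_scope.
Set Implicit Arguments. Unset Strict Implicit. Unset Printing Implicit Defensive.

Section Gen.
Variable R : realType.

Lemma derive_scal (V W : normedModType R) (r : V -> R) (c : W) x d :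
  derivable r x d ->
  derivable (fun y => r y *: c) x d /\ 'D_d (fun y => r y *: c) x = 'D_d r x *: c.
Proof.
move=> dr.
have H : (fun h : R => h^-1 *: (((fun y => r y *: c) \o shift x) (h *: d) - r x *: c))
   @ 0^' --> 'D_d r x *: c.
  have -> : (fun h : R => h^-1 *: (((fun y => r y *: c) \o shift x) (h *: d) - r x *: c))
     = (fun h : R => (h^-1 *: ((r \o shift x) (h *: d) - r x)) *: c).
    by apply/funext => h /=; rewrite -scalerBl scalerA.
  apply: cvgZr_tmp; exact: dr.
split; first by apply/cvg_ex; eexists; exact: H.
exact: cvg_lim H.
Qed.

End Gen.

Section Bil.
Variable R : realType.
Variables (A C W : lmodType R) (B : A -> C -> W).
Hypothesis HB1 : forall a u v w, B (a *: u + v) w = a *: B u w + B v w.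
Hypothesis HB2 : forall a u v w, B u (a *: v + w) = a *: B u v + B u w.

Lemma B0l w : B 0 w = 0.
Proof. have := HB1 1 0 0 w; rewrite scaler0 addr0 scale1r => h.
by apply/(addrI (B 0 w)); rewrite addr0 -h. Qed.
Lemma B0r u : B u 0 = 0.
Proof. have := HB2 1 u 0 0; rewrite scaler0 addr0 scale1r => h.
by apply/(addrI (B u 0)); rewrite addr0 -h. Qed.
Lemma BZl a u w : B (a *: u) w = a *: B u w.
Proof. by rewrite -[a *: u]addr0 HB1 B0l addr0. Qed.
Lemma BZr a u w : B u (a *: w) = a *: B u w.
Proof. by rewrite -[a *: w]addr0 HB2 B0r addr0. Qed.
Lemma BDl u v w : B (u + v) w = B u w + B v w.
Proof. by have := HB1 1 u v w; rewrite !scale1r. Qed.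
Lemma BDr u v w : B w (u + v) = B w u + B w v.
Proof. by have := HB2 1 w u v; rewrite !scale1r. Qed.
Lemma BNl u w : B (- u) w = - B u w.
Proof. by rewrite -scaleN1r BZl scaleN1r. Qed.
Lemma BNr u w : B w (- u) = - B w u.
Proof. by rewrite -scaleN1r BZr scaleN1r. Qed.
Lemma BBl u v w : B (u - v) w = B u w - B v w.
Proof. by rewrite BDl BNl. Qed.
Lemma BBr u v w : B w (u - v) = B w u - B w v.
Proof. by rewrite BDr BNr. Qed.
Lemma B_suml I (r : seq I) (P : pred I) (F : I -> A) w :
  B (\sum_(i <- r | P i) F i) w = \sum_(i <- r | P i) B (F i) w.
Proof.
apply: (big_rec2 (fun x y => B x w = y)); first exact: B0l.
by move=> i y1 y2 _ <-; rewrite BDl.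
Qed.
Lemma B_sumr I (r : seq I) (P : pred I) (F : I -> C) w :
  B w (\sum_(i <- r | P i) F i) = \sum_(i <- r | P i) B w (F i).
Proof.
apply: (big_rec2 (fun x y => B w x = y)); first exact: B0r.
by move=> i y1 y2 _ <-; rewrite BDr.
Qed.
End Bil.

Section BilMx.
Variable R : realType.
Variables (p1 q1 p2 q2 : nat) (W : lmodType R) (B : 'M[R]_(p1,q1) -> 'M[R]_(p2,q2) -> W).
Hypothesis HB1 : forall a u v w, B (a *: u + v) w = a *: B u w + B v w.
Hypothesis HB2 : forall a u v w, B u (a *: v + w) = a *: B u v + B u w.

Lemma bil_expand u w : B u w =
  \sum_i \sum_j \sum_k \sum_l (u i j * w k l) *: B (delta_mx i j) (delta_mx k l).
Proof.
rewrite {1}(matrix_sum_delta u) (B_suml HB1); apply: eq_bigr => i _.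
rewrite (B_suml HB1); apply: eq_bigr => j _.
rewrite (BZl HB1) {1}(matrix_sum_delta w) (B_sumr HB2) scaler_sumr.
apply: eq_bigr => k _.
rewrite (B_sumr HB2) scaler_sumr; apply: eq_bigr => l _.
by rewrite (BZr HB2) scalerA.
Qed.
End BilMx.

Section HasD.
Variable R : realType.
Variable V : normedModType R.

Definition hasD (W : normedModType R) (f : V -> W) x d (l : W) :=
  derivable f x d /\ 'D_d f x = l.

Lemma hasD_derivable (W : normedModType R) (f : V -> W) x d :
  derivable f x d -> hasD f x d ('D_d f x).
Proof. by []. Qed.

Lemma hasD_ext (W : normedModType R) (f g : V -> W) x d l :
  (forall y, f y = g y) -> hasD f x d l -> hasD g x d l.
Proof. by move=> fg; have -> : f = g by apply/funext. Qed.

Lemma hasD_eq (W : normedModType R) (f : V -> W) x d l l' :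
  l = l' -> hasD f x d l -> hasD f x d l'.
Proof. by move=> ->. Qed.

Lemma hasD_near (W : normedModType R) (f g : V -> W) x d l :
  (\near x, f x = g x) -> hasD f x d l -> hasD g x d l.
Proof.
move=> fg [df <-]; split; first exact: near_eq_derivable df.
by apply/esym/near_eq_derive.
Qed.

Lemma hasD_cst (W : normedModType R) (c : W) x d : hasD (fun _ => c) x d 0.
Proof. split; [exact: derivable_cst | exact: derive_cst]. Qed.

Lemma hasD_id x d : hasD id x d d.
Proof. split; [exact: derivable_id | exact: derive_id]. Qed.

Lemma hasD_add (W : normedModType R) (f g : V -> W) x d l1 l2 :
  hasD f x d l1 -> hasD g x d l2 -> hasD (fun y => f y + g y) x d (l1 + l2).
Proof.
move=> [df <-] [dg <-]; split; first exact: derivableD.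
exact: deriveD.
Qed.

Lemma hasD_opp (W : normedModType R) (f : V -> W) x d l1 :
  hasD f x d l1 -> hasD (fun y => - f y) x d (- l1).
Proof.
move=> [df <-]; split; first exact: derivableN.
exact: deriveN.
Qed.

Lemma hasD_sub (W : normedModType R) (f g : V -> W) x d l1 l2 :
  hasD f x d l1 -> hasD g x d l2 -> hasD (fun y => f y - g y) x d (l1 - l2).
Proof. by move=> h1 h2; apply: hasD_add h1 (hasD_opp h2). Qed.

Lemma hasD_scale (W : normedModType R) (k : R) (f : V -> W) x d l1 :
  hasD f x d l1 -> hasD (fun y => k *: f y) x d (k *: l1).
Proof.
move=> [df <-]; split; first exact: derivableZ.
exact: deriveZ.
Qed.

Lemma hasD_mul (f g : V -> R) x d l1 l2 :
  hasD f x d l1 -> hasD g x d l2 -> hasD (fun y => f y * g y) x d (f x * l2 + g x * l1).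
Proof.
move=> [df <-] [dg <-]; split; first exact: derivableM.
exact: deriveM.
Qed.

Lemma hasD_scal (W : normedModType R) (r : V -> R) (c : W) x d l :
  hasD r x d l -> hasD (fun y => r y *: c) x d (l *: c).
Proof. by move=> [dr <-]; exact: derive_scal. Qed.

Lemma hasD_sum (W : normedModType R) m (h : 'I_m -> V -> W) x d (l : 'I_m -> W) :
  (forall i, hasD (h i) x d (l i)) -> hasD (fun y => \sum_i h i y) x d (\sum_i l i).
Proof.
move=> H; rewrite -fct_sumE; split.
  by apply: derivable_sum => i; case: (H i).
rewrite derive_sum; last by move=> i; case: (H i).
by apply: eq_bigr => i _; case: (H i).
Qed.

Lemma hasD_entry p q (f : V -> 'M[R]_(p,q)) x d l i j :
  hasD f x d l -> hasD (fun y => f y i j) x d (l i j).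
Proof.
move=> [df <-]; split; first by move/derivable_mxP: df; apply.
by rewrite derive_mx // mxE.
Qed.

Lemma hasD_mx p q (f : V -> 'M[R]_(p,q)) x d (l : 'M[R]_(p,q)) :
  (forall i j, hasD (fun y => f y i j) x d (l i j)) -> hasD f x d l.
Proof.
move=> H.
have df : derivable f x d by apply/derivable_mxP => i j; case: (H i j).
split => //; rewrite derive_mx //; apply/matrixP => i j; rewrite mxE.
by case: (H i j).
Qed.

Lemma hasD_bil p1 q1 p2 q2 (W : normedModType R)
  (B : 'M[R]_(p1,q1) -> 'M[R]_(p2,q2) -> W)
  (HB1 : forall a u v w, B (a *: u + v) w = a *: B u w + B v w)
  (HB2 : forall a u v w, B u (a *: v + w) = a *: B u v + B u w)
  (f : V -> 'M[R]_(p1,q1)) (g : V -> 'M[R]_(p2,q2)) x d l1 l2 :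
  hasD f x d l1 -> hasD g x d l2 ->
  hasD (fun y => B (f y) (g y)) x d (B l1 (g x) + B (f x) l2).
Proof.
move=> hf hg.
apply: (hasD_ext (f := fun y => \sum_i \sum_j \sum_k \sum_l
   (f y i j * g y k l) *: B (delta_mx i j) (delta_mx k l))).
  by move=> y; rewrite -bil_expand.
apply: hasD_eq; last first.
  apply: hasD_sum => i; apply: hasD_sum => j; apply: hasD_sum => k; apply: hasD_sum => l.
  apply: hasD_scal; apply: hasD_mul; apply: hasD_entry; eassumption.
rewrite (bil_expand HB1 HB2 l1) (bil_expand HB1 HB2 (f x)) -big_split /=.
apply: eq_bigr => i _; rewrite -big_split; apply: eq_bigr => j _.
rewrite -big_split; apply: eq_bigr => k _; rewrite -big_split; apply: eq_bigr => l _.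
by rewrite /= scalerDl addrC [g x k l * _]mulrC.
Qed.

End HasD.

Section Poly.
Variables (R : realType) (n : nat).
Local Notation V := 'rV[R]_n.

Inductive poly : (V -> R) -> Prop :=
| Pcst c : poly (fun _ => c)
| Pcrd i : poly (fun x => x 0 i)
| Padd f g : poly f -> poly g -> poly (fun x => f x + g x)
| Pmul f g : poly f -> poly g -> poly (fun x => f x * g x).

Lemma poly_ext f g : poly f -> (forall x, f x = g x) -> poly g.
Proof. by move=> pf fg; have <- : f = g by apply/funext. Qed.

Lemma poly_diff f : poly f -> forall x, differentiable f x.
Proof.
elim => [c|i|f1 g1 _ IH1 _ IH2|f1 g1 _ IH1 _ IH2] x.
- exact: differentiable_cst.
- exact: differentiable_coord.
- exact: differentiableD.
- exact: differentiableM.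
Qed.

Lemma poly_hasD f x d : poly f -> hasD f x d ('D_d f x).
Proof. by move=> pf; apply: hasD_derivable; apply: diff_derivable; apply: poly_diff. Qed.

Lemma poly_D f d : poly f -> poly (fun x => 'D_d f x).
Proof.
elim => [c|i|f1 g1 p1 IH1 p2 IH2|f1 g1 p1 IH1 p2 IH2].
- eapply poly_ext; first exact: (Pcst 0). move=> x /=.
  by case: (hasD_cst c x d).
- eapply poly_ext; first exact: (Pcst (d 0 i)). move=> x /=.
  by case: (hasD_entry 0 i (hasD_id x d)).
- eapply poly_ext; first exact: (Padd IH1 IH2). move=> x /=.
  by case: (hasD_add (poly_hasD x d p1) (poly_hasD x d p2)).
- eapply poly_ext; first exact: (Padd (Pmul p1 IH2) (Pmul p2 IH1)). move=> x /=.
  by case: (hasD_mul (poly_hasD x d p1) (poly_hasD x d p2)).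
Qed.

Lemma poly_smooth f (A : set V) : poly f -> smooth_on A f.
Proof.
move=> pf vs x _; apply: poly_diff.
elim: vs => [|v vs IH] //=.
exact: poly_D.
Qed.

Lemma poly_sum I (r : seq I) (P : pred I) (F : I -> V -> R) :
  (forall i, poly (F i)) -> poly (fun x => \sum_(i <- r | P i) F i x).
Proof.
move=> H; elim: r => [|a r IH].
  eapply poly_ext; first exact: (Pcst 0). by move=> x; rewrite big_nil.
case Pa: (P a).
  eapply poly_ext; first exact: (Padd (H a) IH). by move=> x; rewrite big_cons Pa.
eapply poly_ext; first exact: IH. by move=> x; rewrite big_cons Pa.
Qed.

Lemma poly_prod I (r : seq I) (P : pred I) (F : I -> V -> R) :
  (forall i, poly (F i)) -> poly (fun x => \prod_(i <- r | P i) F i x).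
Proof.
move=> H; elim: r => [|a r IH].
  eapply poly_ext; first exact: (Pcst 1). by move=> x; rewrite big_nil.
case Pa: (P a).
  eapply poly_ext; first exact: (Pmul (H a) IH). by move=> x; rewrite big_cons Pa.
eapply poly_ext; first exact: IH. by move=> x; rewrite big_cons Pa.
Qed.

Lemma poly_scale c f : poly f -> poly (fun x => c * f x).
Proof. by move=> pf; apply: Pmul (Pcst c) pf. Qed.

Lemma poly_det m (M : V -> 'M[R]_m) :
  (forall i j, poly (fun y => M y i j)) -> poly (fun y => \det (M y)).
Proof.
move=> H; rewrite /determinant; apply: poly_sum => s.
apply: poly_scale; apply: poly_prod => i; exact: H.
Qed.

Lemma poly_adj m (M : V -> 'M[R]_m) :
  (forall i j, poly (fun y => M y i j)) -> forall i j, poly (fun y => \adj (M y) i j).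
Proof.
move=> H i j; eapply poly_ext.
  apply: (poly_scale ((-1) ^+ (j + i)) (f := fun y => \det (row' j (col' i (M y))))).
  apply: poly_det => k l; eapply poly_ext; first exact: (H (lift j k) (lift i l)).
  by move=> y; rewrite !mxE.
by move=> y; rewrite mxE.
Qed.

End Poly.

Section Main1.
Variables (R : realType) (n : nat).
Local Notation V := 'rV[R]_n.
Variables (b : V -> V -> R) (J : V -> V -> 'M[R]_n).
Hypothesis hb : nondeg_sym_bilinear b.
Hypothesis hJ : metric_alg_Jacobi b J.

Lemma b1 a u v w : b (a *: u + v) w = a *: b u w + b v w.
Proof. by case: hb => h _ _; rewrite h. Qed.
Lemma bsym u v : b u v = b v u.
Proof. by case: hb. Qed.
Lemma b2 a u v w : b u (a *: v + w) = a *: b u v + b u w.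
Proof. by rewrite bsym b1 (bsym v) (bsym w). Qed.
Lemma bnd u : (forall v, b u v = 0) -> u = 0.
Proof. by case: hb => _ _; apply. Qed.

Lemma J1 a u v w : J (a *: u + v) w = a *: J u w + J v w.
Proof. by case: hJ => [[h _] _ _ _]; rewrite h. Qed.
Lemma J2 a u v w : J u (a *: v + w) = a *: J u v + J u w.
Proof. by case: hJ => [[_ h] _ _ _]; rewrite h. Qed.
Lemma Jsym u v : J u v = J v u.
Proof. by case: hJ. Qed.
Lemma Jbianchi u v w : w *m J u v + u *m J v w + v *m J w u = 0.
Proof. by case: hJ. Qed.
Lemma Jmetric u v w x : b (w *m J u v) x = b (u *m J w x) v.
Proof. by case: hJ. Qed.

Lemma J00 : J 0 0 = 0.
Proof. exact: (B0l J1). Qed.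

Lemma Gop0 : Gop J 0 = 1%:M.
Proof. by rewrite /Gop J00 scaler0 subr0. Qed.

Lemma UJ0 : UJ J 0.
Proof. by rewrite /UJ /= Gop0 unitmx1. Qed.

Lemma poly_Jyy i j : poly (fun y : V => J y y i j).
Proof.
have HB1 : forall a (u v w : V), (fun p q => J p q i j) (a *: u + v) w
   = a *: (fun p q => J p q i j) u w + (fun p q => J p q i j) v w.
  by move=> a u v w /=; rewrite J1 !mxE.
have HB2 : forall a (u v w : V), (fun p q => J p q i j) u (a *: v + w)
   = a *: (fun p q => J p q i j) u v + (fun p q => J p q i j) u w.
  by move=> a u v w /=; rewrite J2 !mxE.
eapply poly_ext; last first.
  move=> y; symmetry; exact: (bil_expand HB1 HB2 y y).
apply: poly_sum => a; apply: poly_sum => k; apply: poly_sum => c; apply: poly_sum => l.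
eapply poly_ext; first exact: (Pmul (Pmul (Pcrd _ k) (Pcrd _ l)) (Pcst _ (J (delta_mx a k) (delta_mx c l) i j))).
by move=> y /=; rewrite !ord1.
Qed.

Lemma poly_Gop i j : poly (fun y : V => Gop J y i j).
Proof.
eapply poly_ext; first exact: (Padd (Pcst _ ((1%:M : 'M[R]_n) i j)) (poly_scale (- 3%:R^-1) (poly_Jyy i j))).
by move=> y /=; rewrite /Gop !mxE mulNr.
Qed.

Lemma poly_detG : poly (fun y : V => \det (Gop J y)).
Proof. apply: poly_det => i j; exact: poly_Gop. Qed.

Lemma UJ_open : open (UJ J).
Proof.
have -> : UJ J = (fun y : V => \det (Gop J y)) @^-1` [set r : R | r != 0].
  by apply/funext => y; rewrite /UJ /= unitmxE unitfE.
apply: open_comp; last exact: open_neq.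
move=> y _; apply: differentiable_continuous; exact: poly_diff poly_detG y.
Qed.

End Main1.

Section Main2.
Variables (R : realType) (n : nat).
Local Notation V := 'rV[R]_n.
Variables (b : V -> V -> R) (J : V -> V -> 'M[R]_n).
Hypothesis hb : nondeg_sym_bilinear b.
Hypothesis hJ : metric_alg_Jacobi b J.

Local Notation b1 := (b1 hb).
Local Notation b2 := (b2 hb).
Local Notation J1 := (J1 hJ).
Local Notation J2 := (J2 hJ).

Lemma bJJ x u v : b (u *m J x x) v = b (v *m J x x) u.
Proof. by rewrite [LHS](Jmetric hJ) [RHS](Jmetric hJ) (Jsym hJ u). Qed.

Lemma Gsym x u v : b (u *m Gop J x) v = b (v *m Gop J x) u.
Proof.
rewrite /Gop !mulmxBr !mulmx1 -!scalemxAr !(BBl b1) !(BZl b1) bJJ.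
by rewrite (bsym hb u v).
Qed.

Lemma g_nondeg x : UJ J x -> nondeg_sym_bilinear (gmet b J x).
Proof.
move=> Ux; split.
- by move=> a u v w; rewrite /gmet mulmxDl -scalemxAl b1.
- by move=> u v; rewrite /gmet Gsym.
- move=> u H; have : u *m Gop J x = 0 by apply: (bnd hb) => v; exact: H.
  by move=> h; rewrite -(mulmxK Ux u) h mul0mx.
Qed.

Lemma g0 u v : gmet b J 0 u v = b u v.
Proof. by rewrite /gmet (Gop0 hJ) ?mulmx1. Qed.

Lemma torsion u v x : nablaJ J u v x - nablaJ J v u x = bracket u v x.
Proof.
rewrite /nablaJ /bracket (Jsym hJ (u x)).
by rewrite opprD addrACA subrr addr0.
Qed.

Lemma hasD_G x d : hasD (Gop J) x d (- (3%:R^-1 *: (J d x + J x d))).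
Proof.
apply: hasD_eq; last first.
  apply: hasD_sub; first exact: hasD_cst.
  apply: hasD_scale; apply: (hasD_bil J1 J2); exact: hasD_id.
by rewrite sub0r.
Qed.

Lemma mulmx1' p q r (a : R) (u v : 'M[R]_(p,q)) (w : 'M[R]_(q,r)) :
  (a *: u + v) *m w = a *: (u *m w) + v *m w.
Proof. by rewrite mulmxDl scalemxAl. Qed.
Lemma mulmx2' p q r (a : R) (u : 'M[R]_(p,q)) (v w : 'M[R]_(q,r)) :
  u *m (a *: v + w) = a *: (u *m v) + u *m w.
Proof. by rewrite mulmxDr scalemxAr. Qed.

End Main2.

Section Main3.
Variables (R : realType) (n : nat).
Local Notation V := 'rV[R]_n.
Variables (b : V -> V -> R) (J : V -> V -> 'M[R]_n).
Hypothesis hb : nondeg_sym_bilinear b.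
Hypothesis hJ : metric_alg_Jacobi b J.

Local Notation b1 := (b1 hb).
Local Notation b2 := (b2 hb).
Local Notation J1 := (J1 hJ).
Local Notation J2 := (J2 hJ).

Lemma metric_compat (u v w : V -> V) x :
  UJ J x -> differentiable v x -> differentiable w x ->
  'D_(u x) (fun y => gmet b J y (v y) (w y)) x
   = gmet b J x (nablaJ J u v x) (w x) + gmet b J x (v x) (nablaJ J u w x).
Proof.
move=> Ux dv dw.
set d := u x.
have hv := hasD_derivable (diff_derivable (v:=d) dv).
have hw := hasD_derivable (diff_derivable (v:=d) dw).
have hP := hasD_bil (@mulmx1' _ _ _ _) (@mulmx2' _ _ _ _) hv (hasD_G hJ x d).
have hF := hasD_bil b1 b2 hP hw.
rewrite /gmet; case: hF => _ ->.
rewrite /nablaJ /Dvf -/d.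
set Dv := 'D_d v x; set Dw := 'D_d w x; set G := Gop J x.
rewrite mulmxDl -scalemxAl (mulmxKV Ux).
rewrite !(BDl b1) (BZl b1) (BDr b2) (BZr b2).
rewrite [b (v x *m G) (_ *m _)](Gsym hb hJ) (mulmxKV Ux).
rewrite (Jmetric hJ d (w x) x (v x)).
rewrite mulmxN -scalemxAr mulmxDr (Jsym hJ d x) (BNl b1) (BZl b1) (BDl b1).
have hB := congr1 (fun z => b z (w x)) (Jbianchi hJ x d (v x)).
rewrite /= !(BDl b1) (B0l b1) (Jsym hJ (v x) x) in hB.
move: hB.
set A := b (v x *m J x d) (w x); set B := b (x *m J d (v x)) (w x).
set C := b (d *m J x (v x)) (w x).
move=> hB.
rewrite [v x *m (_ + _)]mulmxDr (BDl b1) -/A.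
have sc : forall a r : R, a *: r = a * r by [].
rewrite !sc; lra.
Qed.
End Main3.

Section Schwarz.
Variable R : realType.
Variable V : normedModType R.

Lemma ball_open (U : set V) x : open U -> U x ->
  exists2 r : R, 0 < r & forall y, `|y - x| < r -> U y.
Proof.
move=> oU Ux; have : nbhs x U by apply: open_nbhs_nbhs; split.
move/nbhs_ballP => [r r0 H]; exists r => // y yr.
apply: H; rewrite -ball_normE /= distrC //.
Qed.

Lemma diff_eps (W : normedModType R) (f : V -> W) x : differentiable f x ->
  forall e : R, 0 < e -> exists2 del : R, 0 < del & forall z, `|z| < del ->
   `|f (z + x) - f x - 'd f x z| <= e * `|z|.
Proof.
move=> df e e0; have := diff_locally df.
move/eqaddoP => /(_ e e0) /nbhs_ballP [del del0 H]; exists del => // z zd.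
have := H z; rewrite -ball_normE /= sub0r normrN => /(_ zd).
by rewrite /= opprD addrA.
Qed.

Lemma line_hasD (f : V -> R) (a p : V) (s : R) :
  differentiable f (s *: a + p) ->
  hasD (fun r : R => f (r *: a + p)) s 1 ('D_a f (s *: a + p)).
Proof.
move=> df.
have E : (fun h : R => h^-1 *: (((fun r : R => f (r *: a + p)) \o shift s) (h *: 1)
     - f (s *: a + p)))
  = (fun h : R => h^-1 *: ((f \o shift (s *: a + p)) (h *: a) - f (s *: a + p))).
  apply/funext => h /=.
  by rewrite [h *: 1]mulr1 scalerDl addrA.
rewrite /hasD /derivable /derive E; split => //.
exact: diff_derivable df.
Qed.


Lemma delta_approx (f fa : V -> R) (U : set V) x a c :
  open U -> U x -> (forall y, U y -> differentiable f y) ->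
  (forall y, U y -> 'D_a f y = fa y) ->
  differentiable fa x ->
  forall e : R, 0 < e -> exists2 del : R, 0 < del & forall t : R, 0 < t -> t < del ->
   `| (f (t *: a + (t *: c + x)) - f (t *: a + x) - (f (t *: c + x) - f x))
       - t ^+ 2 * 'D_c fa x | <= e * t ^+ 2 * (2 * `|a| + `|c|).
Proof.
move=> oU Ux dfU hfa dg e e0.
have [del1 del10 Hd] := diff_eps dg e0.
have [r r0 Hr] := ball_open oU Ux.
pose K := `|a| + `|c| + 1.
have K0 : 0 < K by rewrite /K; apply: (lt_le_trans ltr01); rewrite lerDr addr_ge0.
exists (Num.min del1 r / K); first by rewrite divr_gt0 // lt_min del10 r0.
move=> t t0 tdel.
have tK : t * K < Num.min del1 r by rewrite -ltr_pdivlMr.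
have tK1 : t * K < del1 by move: tK; rewrite lt_min => /andP[].
have tK2 : t * K < r by move: tK; rewrite lt_min => /andP[].
have small : forall s : R, 0 <= s <= t -> forall k : R, 0 <= k <= t ->
   `|s *: a + k *: c| <= t * (`|a| + `|c|).
  move=> s /andP[s0 st] k /andP[k0 kt].
  apply: (le_trans (ler_normD _ _)); rewrite !normrZ !ger0_norm // mulrDr.
  by apply: lerD; apply: ler_wpM2r.
have tKs : t * (`|a| + `|c|) < t * K.
  by rewrite ltr_pM2l // /K ltrDl ltr01.
have inU : forall s : R, 0 <= s <= t -> forall k : R, 0 <= k <= t ->
    U (s *: a + (k *: c + x)).
  move=> s hs k hk; apply: Hr; rewrite addrA addrK.
  exact: (le_lt_trans (small s hs k hk)) (lt_trans tKs tK2).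
have t0' : 0 <= t by exact: ltW.
pose phi := fun s : R => f (s *: a + (t *: c + x)) - f (s *: a + (0 *: c + x)).
pose dphi := fun s : R => 'D_a f (s *: a + (t *: c + x)) - 'D_a f (s *: a + (0 *: c + x)).
have hphi : forall s : R, 0 <= s <= t -> hasD phi s 1 (dphi s).
  move=> s hs; apply: hasD_sub; apply: line_hasD; apply: dfU; apply: inU => //.
  by rewrite lexx t0'.
  by rewrite lexx.
have [s0 s0in Hmvt] : exists2 s0, s0 \in `]0, t[%R & phi t - phi 0 = dphi s0 * (t - 0).
  apply: (@MVT R phi dphi 0 t t0).
    move=> s; rewrite in_itv /= => /andP[s0 st].
    have hs : 0 <= s <= t by rewrite !ltW.
    have [h1 h2] := hphi s hs.
    by split.
  apply: continuous_subspace_itv => s; rewrite in_itv /= => hs.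
  have [h1 _] := hphi s hs.
  by apply: differentiable_continuous; apply/derivable1_diffP.
have -> : f (t *: a + (t *: c + x)) - f (t *: a + x) - (f (t *: c + x) - f x)
    = phi t - phi 0 by rewrite /phi !scale0r !add0r.
rewrite Hmvt subr0 (deriveE c dg).
set L := 'd fa x.
move: s0in; rewrite in_itv /= => /andP[s0p s0t].
have s0t' : 0 <= s0 <= t by rewrite !ltW.
set z1 := s0 *: a + t *: c; set z2 := s0 *: a.
have hz1 : `|z1| <= t * (`|a| + `|c|) by apply: small => //; rewrite lexx t0'.
have hz2 : `|z2| <= t * `|a|.
  rewrite /z2 normrZ ger0_norm; last exact: ltW.
  by apply: ler_wpM2r => //; exact: ltW.
have E1 := Hd z1 (le_lt_trans hz1 (lt_trans tKs tK1)).
have hz2' : `|z2| < del1.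
  apply: (le_lt_trans hz2); apply: le_lt_trans (lt_trans tKs tK1).
  by rewrite ler_wpM2l // lerDl.
have E2 := Hd z2 hz2'.
have Lz : L z1 = L z2 + t *: L c by rewrite /z1 linearD [L (t *: c)]linearZ.
have -> : dphi s0 * t - t ^+ 2 * L c =
   t * ((fa (z1 + x) - fa x - L z1) - (fa (z2 + x) - fa x - L z2)).
  have U1 : U (z1 + x) by rewrite /z1 -addrA; apply: inU => //; rewrite lexx t0'.
  have U2 : U (z2 + x).
    by have := inU s0 s0t' 0; rewrite scale0r add0r lexx t0'; apply.
  rewrite /dphi scale0r add0r -/z2 (addrA z2) -/z1 Lz (hfa _ U1) (hfa _ U2).
  rewrite -[t *: L c]/(t * L c). ring.
rewrite normrM ger0_norm //.
apply: (le_trans (ler_wpM2l t0' (ler_normB _ _))).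
apply: (le_trans (ler_wpM2l t0' (lerD E1 E2))).
rewrite -mulrDr.
apply: (le_trans (ler_wpM2l t0' (ler_wpM2l (ltW e0) (lerD hz1 hz2)))).
rewrite le_eqVlt; apply/orP; left; apply/eqP; ring.
Qed.


Lemma small_zero (y M : R) : 0 <= M -> (forall e : R, 0 < e -> `|y| <= e * M) -> y = 0.
Proof.
move=> M0 H; apply/normr0_eq0/eqP; rewrite eq_le normr_ge0 andbT.
apply/ler_addgt0Pr => e e0; rewrite add0r.
have M1 : 0 < M + 1 by rewrite ltr_wpDl.
apply: (le_trans (H (e / (M + 1)) _)); first by rewrite divr_gt0.
by rewrite mulrAC ler_pdivrMr // ler_pM2l // lerDl.
Qed.

Lemma schwarz (f fa fc : V -> R) (U : set V) x a c :
  open U -> U x -> (forall y, U y -> differentiable f y) ->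
  (forall y, U y -> 'D_a f y = fa y) -> (forall y, U y -> 'D_c f y = fc y) ->
  differentiable fa x -> differentiable fc x ->
  'D_c fa x = 'D_a fc x.
Proof.
move=> oU Ux dfU hfa hfc da dc.
apply/eqP; rewrite -subr_eq0; apply/eqP.
apply: (@small_zero _ (3%:R * (`|a| + `|c|))).
  by rewrite mulr_ge0 // addr_ge0.
move=> e e0.
have [del1 del10 H1] := delta_approx c oU Ux dfU hfa da e0.
have [del2 del20 H2] := delta_approx a oU Ux dfU hfc dc e0.
pose t := Num.min del1 del2 / 2.
have t0 : 0 < t by rewrite divr_gt0 // lt_min del10 del20.
have tm : t < Num.min del1 del2 by rewrite /t ltr_pdivrMr // ltr_pMr ?ltr1n // lt_min del10 del20.
have t1 : t < del1 by move: tm; rewrite lt_min => /andP[].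
have t2 : t < del2 by move: tm; rewrite lt_min => /andP[].
have {H1}H1 := H1 t t0 t1.
have {H2}H2 := H2 t t0 t2.
rewrite [t *: c + (t *: a + x)]addrCA in H2.
set Da := f (t *: a + (t *: c + x)) in H1 H2.
set D1 := 'D_c fa x in H1 *; set D2 := 'D_a fc x in H2 *.
rewrite -(@ler_pM2l _ (t ^+ 2)) ?exprn_gt0 //.
have -> : t ^+ 2 * `|D1 - D2| = `|(Da - f (t *: c + x) - (f (t *: a + x) - f x) - t ^+ 2 * D2)
     - (Da - f (t *: a + x) - (f (t *: c + x) - f x) - t ^+ 2 * D1)|.
  rewrite -[in LHS](ger0_norm (ltW (exprn_gt0 2 t0))) -normrM; congr `|_|; ring.
apply: (le_trans (ler_normB _ _)).
apply: (le_trans (lerD H2 H1)).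
rewrite le_eqVlt; apply/orP; left; apply/eqP; ring.
Qed.

End Schwarz.

Section SchwarzVec.
Variables (R : realType) (n : nat).
Local Notation V := 'rV[R]_n.

Lemma diff_entry p q (F : V -> 'M[R]_(p,q)) x i j :
  differentiable F x -> differentiable (fun y => F y i j) x.
Proof.
move=> dF.
have -> : (fun y => F y i j) = (fun N : 'M[R]_(p,q) => N i j) \o F by [].
apply: differentiable_comp => //; exact: differentiable_coord.
Qed.

Lemma D_entry p q (F : V -> 'M[R]_(p,q)) x d i j :
  derivable F x d -> 'D_d F x i j = 'D_d (fun y => F y i j) x.
Proof. by move=> dF; rewrite derive_mx // mxE. Qed.

Lemma schwarz_vec (w : V -> V) (U : set V) x a c :
  open U -> U x -> (forall y, U y -> differentiable w y) ->
  differentiable ('D_a w) x -> differentiable ('D_c w) x ->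
  'D_c ('D_a w) x = 'D_a ('D_c w) x.
Proof.
move=> oU Ux dw da dc; apply/matrixP => p q.
have E1 : 'D_c ('D_a w) x p q = 'D_c (fun y => 'D_a w y p q) x.
  by apply: D_entry; exact: diff_derivable.
have E2 : 'D_a ('D_c w) x p q = 'D_a (fun y => 'D_c w y p q) x.
  by apply: D_entry; exact: diff_derivable.
apply: (eq_trans E1); apply: (eq_trans _ (esym E2)).
apply: (schwarz (f := fun y => w y p q) oU Ux).
- by move=> y Uy; apply: diff_entry; apply: dw.
- by move=> y Uy; rewrite D_entry //; apply: diff_derivable; apply: dw.
- by move=> y Uy; rewrite D_entry //; apply: diff_derivable; apply: dw.
- exact: diff_entry.
- exact: diff_entry.
Qed.

Lemma dir_expand (w : V -> V) y d : differentiable w y ->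
  'D_d w y = \sum_i d 0 i *: 'D_('e_i) w y.
Proof.
move=> dw; rewrite (deriveE d dw) {1}(row_sum_delta d) linear_sum.
by apply: eq_bigr => i _; rewrite linearZ (deriveE _ dw).
Qed.

End SchwarzVec.

Lemma zmod5 (M : zmodType) (A B C A' C' : M) :
  (A + B + C) - (A' + B + C') - (A - A') = C - C'.
Proof.
rewrite opprB !opprD !addrA.
rewrite (addrAC (A+B+C) (-A') (-B)) (addrAC (A+B+C-B) (-A') (-C')) subrK.
rewrite (addrAC A B C) addrK (addrAC (A+C) (-C') (-A)) (addrAC A C (-A)) subrr add0r.
by [].
Qed.

Section Curv.
Variables (R : realType) (n : nat).
Local Notation V := 'rV[R]_n.
Variables (b : V -> V -> R) (J : V -> V -> 'M[R]_n).
Hypothesis hb : nondeg_sym_bilinear b.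
Hypothesis hJ : metric_alg_Jacobi b J.
Local Notation U := (UJ J).
Local Notation J1 := (J1 hJ).
Local Notation J2 := (J2 hJ).

Lemma hasD_scalv p q (r : V -> R) (F : V -> 'M[R]_(p,q)) x d lr lF :
  hasD r x d lr -> hasD F x d lF ->
  hasD (fun y => r y *: F y) x d (r x *: lF + lr *: F x).
Proof.
move=> hr hF; apply: hasD_mx => i j.
apply: (hasD_ext (f := fun y => r y * F y i j)); first by move=> y; rewrite mxE.
apply: hasD_eq; last by apply: hasD_mul; [exact: hr | exact: hasD_entry hF].
by rewrite !mxE [F x i j * _]mulrC.
Qed.

Lemma nearU : \forall y \near (0 : V), U y.
Proof. by apply: open_nbhs_nbhs; split; [exact: (UJ_open hJ) | exact: (UJ0 hJ)]. Qed.

Lemma sm0 (w : V -> V) vs : smooth_on U w -> differentiable (dderiv vs w) 0.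
Proof. by move=> sw; apply: sw; exact: (UJ0 hJ). Qed.

Lemma hasD_Dvf (v w : V -> V) a : smooth_on U v -> smooth_on U w ->
  hasD (Dvf v w) 0 a (\sum_i ('D_a v 0) 0 i *: 'D_('e_i) w 0
                      + \sum_i (v 0) 0 i *: 'D_a ('D_('e_i) w) 0).
Proof.
move=> sv sw.
apply: (hasD_near (f := fun y => \sum_i (v y) 0 i *: 'D_('e_i) w y)).
  apply: filterS nearU => y Uy.
  by rewrite /Dvf (dir_expand _ (sw [::] y Uy)).
apply: hasD_eq; last first.
  apply: hasD_sum => i; apply: hasD_scalv.
    by apply: hasD_entry; apply: hasD_derivable; apply: diff_derivable; exact: (sm0 [::] sv).
  by apply: hasD_derivable; apply: diff_derivable; exact: (sm0 [:: 'e_i] sw).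
by rewrite big_split /= addrC.
Qed.

Lemma derivable_invG a : derivable (fun y => invmx (Gop J y)) 0 a.
Proof.
apply: (near_eq_derivable (f := fun y => (\det (Gop J y))^-1 *: \adj (Gop J y))).
  apply: filterS nearU => y Uy.
  by rewrite /invmx; move: Uy; rewrite /UJ /= => ->.
apply/derivable_mxP => i j.
have -> : (fun y => ((\det (Gop J y))^-1 *: \adj (Gop J y)) i j)
   = (fun y => (\det (Gop J y))^-1 * \adj (Gop J y) i j) by apply/funext => y; rewrite mxE.
apply: derivableM.
  apply: derivableV; first by rewrite (Gop0 hJ) det1 oner_neq0.
  apply: diff_derivable; exact: (poly_diff (poly_detG hJ)).
apply: diff_derivable; apply: poly_diff; apply: poly_adj => k l; exact: (poly_Gop hJ).
Qed.

Lemma hasD_N (v w : V -> V) a : smooth_on U v -> smooth_on U w ->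
  hasD (fun y => (2%:R / 3%:R) *: ((y *m J (v y) (w y)) *m invmx (Gop J y))) 0 a
       ((2%:R / 3%:R) *: (a *m J (v 0) (w 0))).
Proof.
move=> sv sw.
have hv := hasD_derivable (diff_derivable (v:=a) (sm0 [::] sv : differentiable v 0)).
have hw := hasD_derivable (diff_derivable (v:=a) (sm0 [::] sw : differentiable w 0)).
have hI := hasD_derivable (derivable_invG (a:=a)).
have hJvw := hasD_bil J1 J2 hv hw.
have h1 := hasD_bil (@mulmx1' _ _ _ _) (@mulmx2' _ _ _ _) (hasD_id 0 a) hJvw.
have h2 := hasD_bil (@mulmx1' _ _ _ _) (@mulmx2' _ _ _ _) h1 hI.
apply: hasD_eq (hasD_scale _ h2).
by rewrite !mul0mx !addr0 (Gop0 hJ) invmx1 mulmx1.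
Qed.

Lemma hasD_nab (v w : V -> V) a : smooth_on U v -> smooth_on U w ->
  hasD (nablaJ J v w) 0 a (\sum_i ('D_a v 0) 0 i *: 'D_('e_i) w 0
                      + \sum_i (v 0) 0 i *: 'D_a ('D_('e_i) w) 0
                      + (2%:R / 3%:R) *: (a *m J (v 0) (w 0))).
Proof.
move=> sv sw; exact: hasD_add (hasD_Dvf a sv sw) (hasD_N a sv sw).
Qed.

Lemma nab_at0 (u v : V -> V) : nablaJ J u v 0 = 'D_(u 0) v 0.
Proof. by rewrite /nablaJ /Dvf !mul0mx scaler0 addr0. Qed.

Lemma Ssym (w : V -> V) (p q : V) : smooth_on U w ->
  \sum_i p 0 i *: 'D_q ('D_('e_i) w) 0 = \sum_i q 0 i *: 'D_p ('D_('e_i) w) 0.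
Proof.
move=> sw.
have E : forall (r : V) i, 'D_r ('D_('e_i) w) 0 = \sum_j r 0 j *: 'D_('e_j) ('D_('e_i) w) 0.
  by move=> r i; rewrite (dir_expand _ (sm0 [:: 'e_i] sw)).
have L : forall (p q : V), \sum_i p 0 i *: 'D_q ('D_('e_i) w) 0 =
   \sum_i \sum_j (p 0 i * q 0 j) *: 'D_('e_j) ('D_('e_i) w) 0.
  move=> p' q'; apply: eq_bigr => i _; rewrite (E q' i) scaler_sumr.
  by apply: eq_bigr => j _; rewrite scalerA.
apply: (eq_trans (L p q)).
apply: (eq_trans _ (esym (L q p))).
rewrite [RHS]exchange_big /=.
apply: eq_bigr => i _; apply: eq_bigr => j _.
have S : 'D_('e_j) ('D_('e_i) w) 0 = 'D_('e_i) ('D_('e_j) w) 0.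
  apply: (schwarz_vec (U := U)); [exact: (UJ_open hJ) | exact: (UJ0 hJ) | | |].
  - by move=> y Uy; exact: (sw [::] y Uy).
  - exact: (sm0 [:: 'e_i] sw).
  - exact: (sm0 [:: 'e_j] sw).
by rewrite S [p 0 i * _]mulrC.
Qed.

End Curv.

Lemma lmod3 (R : realType) (M : lmodType R) (X Y Z : M) : X + Y + Z = 0 ->
  2%:R^-1 *: ((2%:R / 3%:R) *: (X - Z) + (2%:R / 3%:R) *: (X - Y)) = X.
Proof.
move=> h; have -> : Z = - (X + Y) by apply: (addrI (X + Y)); rewrite h subrr.
rewrite -scalerDr opprK scalerA.
have -> : X + (X + Y) + (X - Y) = 3%:R *: X.
  by rewrite scaler_nat !mulrS mulr0n addr0 [X - Y]addrC !addrA addrK.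
rewrite scalerA (_ : 2%:R^-1 * (2%:R / 3%:R) * 3%:R = 1) ?scale1r //.
by rewrite mulrA mulVf ?pnatr_eq0 // mul1r mulVf ?pnatr_eq0.
Qed.

Lemma final_alg (M : zmodType) (A A' B B' C C' T : M) : B = B' -> T = A - A' ->
  (A + B + C) - (A' + B' + C') - T = C - C'.
Proof. by move=> -> ->; rewrite zmod5. Qed.

Section Curv2.
Variables (R : realType) (n : nat).
Local Notation V := 'rV[R]_n.
Variables (b : V -> V -> R) (J : V -> V -> 'M[R]_n).
Hypothesis hb : nondeg_sym_bilinear b.
Hypothesis hJ : metric_alg_Jacobi b J.
Local Notation U := (UJ J).

Lemma Rcurv0 (u v w : V -> V) : smooth_on U u -> smooth_on U v -> smooth_on U w ->
  Rcurv (nablaJ J) u v w 0 = RJ J (u 0) (v 0) (w 0).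
Proof.
move=> su sv sw.
rewrite /Rcurv !(nab_at0 J).
have [_ E1] := hasD_nab hJ (u 0) sv sw.
have [_ E2] := hasD_nab hJ (v 0) su sw.
rewrite E1 E2.
have E3 : 'D_(bracket u v 0) w 0
   = \sum_i ('D_(u 0) v 0) 0 i *: 'D_('e_i) w 0 - \sum_i ('D_(v 0) u 0) 0 i *: 'D_('e_i) w 0.
  rewrite (dir_expand (bracket u v 0) (sm0 hJ [::] sw)).
  rewrite -sumrB; apply: eq_bigr => i _.
  by rewrite /bracket /Dvf !mxE scalerBl.
apply: (etrans (final_alg _ _ (Ssym hJ (v 0) (u 0) sw) E3)).
by rewrite /RJ scalerBr (Jsym hJ (w 0)) (Jsym hJ (w 0)).
Qed.

Lemma Jcurv0 (u v w : V -> V) : smooth_on U u -> smooth_on U v -> smooth_on U w ->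
  Jcurv (nablaJ J) u v w 0 = w 0 *m J (u 0) (v 0).
Proof.
move=> su sv sw.
rewrite /Jcurv (Rcurv0 sw sv su) (Rcurv0 sw su sv) /RJ.
rewrite (Jsym hJ (v 0) (u 0)) (Jsym hJ (u 0) (w 0)).
apply: lmod3.
Show.
exact: (Jbianchi hJ (u 0) (v 0) (w 0)).
Qed.

End Curv2.

Section G.
Variables (R : realType) (n : nat).
Local Notation V := 'rV[R]_n.
Variables (b : V -> V -> R) (J : V -> V -> 'M[R]_n).
Hypothesis hb : nondeg_sym_bilinear b.
Hypothesis hJ : metric_alg_Jacobi b J.

Lemma poly_uG (u : V) i j : poly (fun x => (u *m Gop J x) i j).
Proof.
have h : poly (fun x => \sum_(k < n) u i k * Gop J x k j).
  by apply: poly_sum => k; exact: (Pmul (Pcst _ (u i k)) (poly_Gop hJ k j)).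
eapply poly_ext; first exact: h.
by move=> x; rewrite mxE.
Qed.

Lemma poly_g (u v : V) : poly (fun x => gmet b J x u v).
Proof.
have h : poly (fun x => \sum_i \sum_j \sum_k \sum_l
   ((u *m Gop J x) i j * v k l) *: b (delta_mx i j) (delta_mx k l)).
  apply: poly_sum => i; apply: poly_sum => j; apply: poly_sum => k; apply: poly_sum => l.
  exact: (Pmul (Pmul (poly_uG u i j) (Pcst _ (v k l))) (Pcst _ (b (delta_mx i j) (delta_mx k l)))).
eapply poly_ext; first exact: h.
by move=> x; rewrite /gmet -(bil_expand (b1 hb) (b2 hb)).
Qed.
End G.

Theorem mainTheorem18 (R : realType) (n : nat)
  (b : 'rV[R]_n -> 'rV[R]_n -> R) (J : 'rV[R]_n -> 'rV[R]_n -> 'M[R]_n) :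
  nondeg_sym_bilinear b -> metric_alg_Jacobi b J ->
  let U := UJ J in
  let g := gmet b J in
  let nab := nablaJ J in
  (* U_J is open and contains 0 *)
  (open U /\ U 0) /\
  (* g is a semi-Riemannian metric on U_J, with g_0 = b *)
  [/\ (forall x, U x -> nondeg_sym_bilinear (g x)),
      (forall u v : 'rV[R]_n, smooth_on U (fun x => g x u v))
    & (forall u v, g 0 u v = b u v)] /\
  [/\
  (* nab is the Levi-Civita connection of g: torsion free and metric *)
      (forall u v : 'rV[R]_n -> 'rV[R]_n, smooth_on U u -> smooth_on U v ->
         forall x, U x -> nab u v x - nab v u x = bracket u v x),
      (forall u v w : 'rV[R]_n -> 'rV[R]_n,
         smooth_on U u -> smooth_on U v -> smooth_on U w ->
         forall x, U x ->
           'D_(u x) (fun y => g y (v y) (w y)) x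
             = g x (nab u v x) (w x) + g x (v x) (nab u w x)),
  (* curvature at 0 *)
      (forall u v w : 'rV[R]_n -> 'rV[R]_n,
         smooth_on U u -> smooth_on U v -> smooth_on U w ->
         Rcurv nab u v w 0 = RJ J (u 0) (v 0) (w 0))
    & (forall u v w : 'rV[R]_n -> 'rV[R]_n,
         smooth_on U u -> smooth_on U v -> smooth_on U w ->
         Jcurv nab u v w 0 = w 0 *m J (u 0) (v 0))].
Proof.
move=> hb hJ U g nab.
split; first by split; [exact: (UJ_open hJ) | exact: (UJ0 hJ)].
split.
  split.
  - by move=> x Ux; exact: (g_nondeg hb hJ Ux).
  - by move=> u v; apply: poly_smooth; exact: (poly_g hb hJ).
  - by move=> u v; exact: (g0 hJ).
split.
- by move=> u v _ _ x _; exact: (torsion hJ).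
- move=> u v w su sv sw x Ux; apply: (metric_compat hb hJ) => //.
  + exact: (sv [::] x Ux).
  + exact: (sw [::] x Ux).
- by move=> u v w su sv sw; exact: (Rcurv0 hJ).
- by move=> u v w su sv sw; exact: (Jcurv0 hJ).
Qed.
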